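(* Let $\varphi$ be a condition and $Q_1,Q_2$ queries. For all ground multisets of facts $F,F'$ and all substitutions $\sigma$ such that $\sigma(\varphi)$, $\sigma(Q_1)$, $\sigma(Q_2)$ are closed: if $\mathrm{Init}_{\sigma(\varphi\Rightarrow(Q_1\oplus Q_2))}(F)\to^!\mathrm{Ans}(F')$ then $\mathrm{Init}_{\sigma((\varphi\Rightarrow Q_1)\oplus(\varphi\Rightarrow Q_2))}(F)\to^!\mathrm{Ans}(F')$; the converse implication does not hold in general. If moreover $\varphi$ is deterministic, then $(\varphi\Rightarrow Q_1)\oplus(\varphi\Rightarrow Q_2)\equiv\varphi\Rightarrow(Q_1\oplus Q_2)$.
   Context: Setting. Fix an order-sorted signature $\Sigma$ with sorts $\mathsf{Fact}$, $\mathsf{Bool}$ and a $\Sigma$-algebra of facts $\mathcal{D}$ presented by structural axioms $A$ and confluent terminating equations, providing Boolean connectives and Boolean-valued equality; every ground $\mathsf{Bool}$ term reduces to $\mathsf{true}$ or $\mathsf{false}$. Multisets of facts: associative commutative $\circ$ with identity $\emptyset$. A terminating and preserving pattern $P$ is $[F_1]_!\circ[F_2]_?$ or $[F_2]_?$ ($F_1,F_2$ non-empty, possibly non-ground, multisets of facts); $P_!,P_?$ are the wrapped multisets ($P_!=\emptyset$ if absent). Conditions: $\mathrm{False}$, $\{B\}$, $\neg\psi$, $\psi_1\vee\psi_2$, $\exists P.\psi$ (binding in $\psi$ the variables of $P$ not bound by the context). Condition-evaluation stacks consist of frames $\mathrm{Res}(B)$, $\mathrm{Not}$, $[\vec a]^{\vec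 v}_\psi$, $[\vec a]^{\vec v,\downarrow}_\psi$, $[F'\mid\vec a]^{\vec v}_{\exists P.\psi}$ ($\sigma=\{\vec a/\vec v\}$); rules (''$X\mapsto Y$'' meaning $\{F,S\,X\}^c\to\{F,S\,Y\}^c$, $F$ the database): $[\vec a]_{\mathrm{False}}\mapsto\mathrm{Res}(\mathsf{false})$; $[\vec a]_{\{B\}}\mapsto\mathrm{Res}(\sigma(B))$; $[\vec a]_{\neg\psi}\mapsto\mathrm{Not}[\vec a]_\psi$; $\mathrm{Not}\,\mathrm{Res}(B)\mapsto\mathrm{Res}(\neg B)$; $[\vec a]_{\psi_1\vee\psi_2}\mapsto[\vec a]^\downarrow_{\psi_1}[\vec a]_{\psi_2}$; $[\vec a]^\downarrow_\psi\mathrm{Res}(\mathsf{true})\mapsto\mathrm{Res}(\mathsf{true})$; $[\vec a]^\downarrow_\psi\mathrm{Res}(\mathsf{false})\mapsto[\vec a]_\psi$; $[\vec a]_{\exists P.\psi}\mapsto[F\mid\vec a]_{\exists P.\psi}$; if $\vec w$ lists the variables of $P$ not in $\vec v$, $\sigma'=\{\vec a/\vec v,\vec b/\vec w\}$, $F'=F''\circ\sigma'(P_!\circ P_?)$: $[F'\mid\vec a]_{\exists P.\psi}\mapsto[F''\circ\sigma'(P_!)\mid\vec a]_{\exists P.\psi}[\vec a,\vec b]^{\vec v,\vec w}_\psi$; $[F'\mid\vec a]_{\exists P.\psi}\mathrm{Res}(\mathsf{false})\mapsto[F'\mid\vec a]_{\exists P.\psi}$; $[F'\mid\vec a]_{\exists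 P.\psi}\mathrm{Res}(\mathsf{true})\mapsto\mathrm{Res}(\mathsf{true})$; if no matching of $F'$ exists, $[F'\mid\vec a]_{\exists P.\psi}\mapsto\mathrm{Res}(\mathsf{false})$. Queries: $\emptyset$; facts $f$; $Q_1\oplus Q_2$; $\varphi\Rightarrow Q$; $\mathrm{From}\,P.Q$ ($P$ terminating and preserving, binding like $\exists$). A query is closed if all its variables (in facts and conditions) are bound by enclosing patterns. The system $\mathcal{R}^{\mathrm{query}}_{\Sigma,\mathcal{D}}(Q)$: states $\{F,F',S\}^q$, terminal $\mathrm{Ans}(F')$; with ''$X\mapsto Y$'' meaning $\{F,F',S\,X\}^q\to\{F,F',S\,Y\}^q$: $\{F,F',S[\vec a]_f\}^q\to\{F,F'\circ\sigma(f),S\}^q$; $[\vec a]_\emptyset\mapsto$ (nothing); $[\vec a]_{R_1\oplus R_2}\mapsto[\vec a]_{R_2}[\vec a]_{R_1}$; $[\vec a]_{\varphi\Rightarrow R}\mapsto[\vec a\mid[\vec a]^{\vec v}_\varphi]_R$; $[\vec a\mid\mathrm{Res}(\mathsf{false})]_R\mapsto$ (nothing); $[\vec a\mid\mathrm{Res}(\mathsf{true})]_R\mapsto[\vec a]_R$; for each condition rule $\{F,S'\}^c\to\{F,S''\}^c$, $[\vec a\mid S']_R\mapsto[\vec a\mid S'']_R$; $[\vec a]_{\mathrm{From}\,P.R}\mapsto[F\mid\vec a]_{\mathrm{From}\,P.R}$; if $F''=H\circ\sigma'(P_!\circ P_?)$ then $[F''\mid\vec a]_{\mathrm{From}\,P.R}\mapsto[H\circ\sigma'(P_!)\mid\vec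 a]_{\mathrm{From}\,P.R}[\vec a,\vec b]^{\vec v,\vec w}_R$; if no matching exists, $[F''\mid\vec a]_{\mathrm{From}\,P.R}\mapsto$ (nothing); $\{F,F',\text{empty}\}^q\to\mathrm{Ans}(F')$. $\mathrm{Init}_Q(F):=\{F,\emptyset,[\,]_Q\}^q$; $t\to^!t'$ means $t\to^*t'$ with $t'$ irreducible. Logical equivalence of queries: $Q_1\equiv Q_2$ iff for all ground multisets $F,F'$ and ground substitutions $\sigma$ with $\sigma(Q_1),\sigma(Q_2)$ closed, $\mathrm{Init}_{\sigma(Q_1)}(F)\to^!\mathrm{Ans}(F')$ iff $\mathrm{Init}_{\sigma(Q_2)}(F)\to^!\mathrm{Ans}(F')$. A fully reduced fact term $t$ has the unique matching property if for every ground fully reduced fact $t'$ there is at most one substitution $\sigma$ with $\sigma(t)=t'$; a condition is deterministic if all its quantification patterns consist of a single fact with the unique matching property. *)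

(* Defs.v *)
From Stdlib Require Import Relations.
From mathcomp Require Import all_boot.
Set Implicit Arguments.
Unset Strict Implicit.
Unset Printing Implicit Defensive.

(* Abstract interface to the Sigma-algebra of facts D (presented by    *)
(* structural axioms and confluent terminating equations).             *)
(*  - var   : variables (of any data sort)                             *)
(*  - val   : ground, fully reduced data values                        *)
(*  - gfact : ground, fully reduced facts                              *)
(*  - fterm : (possibly non-ground) fact terms                         *)
(*  - bterm : (possibly non-ground) Bool terms                         *)
(*  fnf t is the normal form of t when t is ground (None otherwise);    *)
(*  bnf b is the value (true/false) of the ground Bool term b.          *)
Record factAlg := FactAlg {
  var : eqType;
  val : Type;
  gfact : eqType;
  fterm : Type;
  bterm : Type;
  fvars : fterm -> seq var;
  fsubst : (var -> option val) -> fterm -> fterm;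
  fnf : fterm -> option gfact;
  bvars : bterm -> seq var;
  bsubst : (var -> option val) -> bterm -> bterm;
  bnf : bterm -> option bool;
  fvars_subst : forall s t x,
    x \in fvars (fsubst s t) <-> (x \in fvars t /\ s x = None);
  fsubst_ext : forall s1 s2 t,
    (forall x, x \in fvars t -> s1 x = s2 x) -> fsubst s1 t = fsubst s2 t;
  fnf_ground : forall t, fnf t = None <-> fvars t <> [::];
  bvars_subst : forall s b x,
    x \in bvars (bsubst s b) <-> (x \in bvars b /\ s x = None);
  bsubst_ext : forall s1 s2 b,
    (forall x, x \in bvars b -> s1 x = s2 x) -> bsubst s1 b = bsubst s2 b;
  bnf_ground : forall b, bnf b = None <-> bvars b <> [::]
}.

Section Queries.
Variable A : factAlg.

(* ground (partial) substitutions / environments [a]^v : v |-> a *)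
Definition env := var A -> option (val A).
Definition env0 : env := fun _ => None.

(* A pattern [F1]_! o [F2]_? is the pair (F1, F2); F1 = [::] encodes   *)
(* an absent [_]_! part.                                               *)
Definition pattern := (seq (fterm A) * seq (fterm A))%type.
Definition pat_bang (P : pattern) := P.1.
Definition pat_quest (P : pattern) := P.2.
Definition pvars (P : pattern) : seq (var A) :=
  flatten (map (@fvars A) (P.1 ++ P.2)).

(* terminating and preserving: the [_]_? part is non-empty *)
Definition pat_tp (P : pattern) : Prop := P.2 <> [::].

Inductive cond :=
| CFalse
| CBool of bterm A
| CNot of cond
| COr of cond & cond
| CEx of pattern & cond.

Inductive query :=
| QEmpty
| QFact of fterm A
| QPlus of query & query
| QImp of cond & query
| QFrom of pattern & query.

Fixpoint cond_wf (c : cond) : Prop :=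
  match c with
  | CFalse | CBool _ => True
  | CNot c1 => cond_wf c1
  | COr c1 c2 => cond_wf c1 /\ cond_wf c2
  | CEx P c1 => pat_tp P /\ cond_wf c1
  end.

Fixpoint query_wf (q : query) : Prop :=
  match q with
  | QEmpty | QFact _ => True
  | QPlus q1 q2 => query_wf q1 /\ query_wf q2
  | QImp c q1 => cond_wf c /\ query_wf q1
  | QFrom P q1 => pat_tp P /\ query_wf q1
  end.

(* pattern).  Pattern variables are always bound (by that pattern or an *)
(* enclosing one), so patterns are left untouched.                     *)
Definition restrict (s : env) (bnd : seq (var A)) : env :=
  fun x => if x \in bnd then None else s x.

Fixpoint csubst_in (bnd : seq (var A)) (s : env) (c : cond) : cond :=
  match c with
  | CFalse => CFalse
  | CBool b => CBool (bsubst (restrict s bnd) b)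
  | CNot c1 => CNot (csubst_in bnd s c1)
  | COr c1 c2 => COr (csubst_in bnd s c1) (csubst_in bnd s c2)
  | CEx P c1 => CEx P (csubst_in (bnd ++ pvars P) s c1)
  end.

Fixpoint qsubst_in (bnd : seq (var A)) (s : env) (q : query) : query :=
  match q with
  | QEmpty => QEmpty
  | QFact f => QFact (fsubst (restrict s bnd) f)
  | QPlus q1 q2 => QPlus (qsubst_in bnd s q1) (qsubst_in bnd s q2)
  | QImp c q1 => QImp (csubst_in bnd s c) (qsubst_in bnd s q1)
  | QFrom P q1 => QFrom P (qsubst_in (bnd ++ pvars P) s q1)
  end.

Definition csubst (s : env) (c : cond) := csubst_in [::] s c.
Definition qsubst (s : env) (q : query) := qsubst_in [::] s q.

Fixpoint cclosed_in (bnd : seq (var A)) (c : cond) : bool :=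
  match c with
  | CFalse => true
  | CBool b => all (fun x => x \in bnd) (bvars b)
  | CNot c1 => cclosed_in bnd c1
  | COr c1 c2 => cclosed_in bnd c1 && cclosed_in bnd c2
  | CEx P c1 => cclosed_in (bnd ++ pvars P) c1
  end.

Fixpoint qclosed_in (bnd : seq (var A)) (q : query) : bool :=
  match q with
  | QEmpty => true
  | QFact f => all (fun x => x \in bnd) (fvars f)
  | QPlus q1 q2 => qclosed_in bnd q1 && qclosed_in bnd q2
  | QImp c q1 => cclosed_in bnd c && qclosed_in bnd q1
  | QFrom P q1 => qclosed_in (bnd ++ pvars P) q1
  end.

Definition cclosed (c : cond) := cclosed_in [::] c.
Definition qclosed (q : query) := qclosed_in [::] q.

Definition ginst (s : env) (t : fterm A) : option (gfact A) := fnf (fsubst s t).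
Definition insts (s : env) (ts : seq (fterm A)) (gs : seq (gfact A)) : Prop :=
  map (ginst s) ts = map Some gs.

(* sigma' = {a/v, b/w}, w = variables of P not in v; groundness of the *)
(* instance (required by insts below) forces b to be defined on w.     *)
Definition ext_env (e : env) (P : pattern) (b : env) : env :=
  fun x => match e x with
           | Some a => Some a
           | None => if x \in pvars P then b x else None
           end.

(* F' = F'' o sigma'(P_! o P_?) ; returns F'' o sigma'(P_!) and sigma' *)
Definition pmatch (e : env) (P : pattern) (F' : seq (gfact A))
    (e' : env) (Fnew : seq (gfact A)) : Prop :=
  exists (b : env) (F'' gb gq : seq (gfact A)),
    [/\ e' = ext_env e P b, insts e' P.1 gb, insts e' P.2 gq,
        perm_eq F' (F'' ++ gb ++ gq) & Fnew = F'' ++ gb].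

Definition nomatch (e : env) (P : pattern) (F' : seq (gfact A)) : Prop :=
  forall e' Fnew, ~ pmatch e P F' e' Fnew.

(* condition evaluation stacks; the head of the list is the TOP frame *)
Inductive cframe :=
| FRes of bool
| FNot
| FEval of env & cond
| FDown of env & cond
| FEx of seq (gfact A) & env & pattern & cond.

Inductive cstep (F : seq (gfact A)) : seq cframe -> seq cframe -> Prop :=
| cs_false e S : cstep F (FEval e CFalse :: S) (FRes false :: S)
| cs_bool e B bv S : bnf (bsubst e B) = Some bv ->
    cstep F (FEval e (CBool B) :: S) (FRes bv :: S)
| cs_not e c S : cstep F (FEval e (CNot c) :: S) (FEval e c :: FNot :: S)
| cs_notres bv S : cstep F (FRes bv :: FNot :: S) (FRes (~~ bv) :: S)
| cs_or e c1 c2 S :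
    cstep F (FEval e (COr c1 c2) :: S) (FEval e c2 :: FDown e c1 :: S)
| cs_down_true e c S : cstep F (FRes true :: FDown e c :: S) (FRes true :: S)
| cs_down_false e c S : cstep F (FRes false :: FDown e c :: S) (FEval e c :: S)
| cs_ex e P c S : cstep F (FEval e (CEx P c) :: S) (FEx F e P c :: S)
| cs_ex_match F' e P c S e' Fnew : pmatch e P F' e' Fnew ->
    cstep F (FEx F' e P c :: S) (FEval e' c :: FEx Fnew e P c :: S)
| cs_ex_false F' e P c S :
    cstep F (FRes false :: FEx F' e P c :: S) (FEx F' e P c :: S)
| cs_ex_true F' e P c S :
    cstep F (FRes true :: FEx F' e P c :: S) (FRes true :: S)
| cs_ex_nomatch F' e P c S : nomatch e P F' ->
    cstep F (FEx F' e P c :: S) (FRes false :: S).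

(* query evaluation stacks; head = top *)
Inductive qframe :=
| QFEval of env & query
| QFCond of env & seq cframe & query
| QFFrom of seq (gfact A) & env & pattern & query.

Inductive qstate :=
| QState of seq (gfact A) & seq qframe   (* {F, F', S}^q, F fixed *)
| QAns of seq (gfact A).

Inductive qstep (F : seq (gfact A)) : qstate -> qstate -> Prop :=
| qs_fact e f g out S : ginst e f = Some g ->
    qstep F (QState out (QFEval e (QFact f) :: S)) (QState (out ++ [:: g]) S)
| qs_empty e out S : qstep F (QState out (QFEval e QEmpty :: S)) (QState out S)
| qs_plus e q1 q2 out S :
    qstep F (QState out (QFEval e (QPlus q1 q2) :: S))
            (QState out (QFEval e q1 :: QFEval e q2 :: S))
| qs_imp e c q out S :
    qstep F (QState out (QFEval e (QImp c q) :: S))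
            (QState out (QFCond e [:: FEval e c] q :: S))
| qs_cond_false e q out S :
    qstep F (QState out (QFCond e [:: FRes false] q :: S)) (QState out S)
| qs_cond_true e q out S :
    qstep F (QState out (QFCond e [:: FRes true] q :: S))
            (QState out (QFEval e q :: S))
| qs_cond_step e S1 S2 q out S : cstep F S1 S2 ->
    qstep F (QState out (QFCond e S1 q :: S)) (QState out (QFCond e S2 q :: S))
| qs_from e P q out S :
    qstep F (QState out (QFEval e (QFrom P q) :: S))
            (QState out (QFFrom F e P q :: S))
| qs_from_match F'' e P q out S e' Fnew : pmatch e P F'' e' Fnew ->
    qstep F (QState out (QFFrom F'' e P q :: S))
            (QState out (QFEval e' q :: QFFrom Fnew e P q :: S))
| qs_from_nomatch F'' e P q out S : nomatch e P F'' ->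
    qstep F (QState out (QFFrom F'' e P q :: S)) (QState out S)
| qs_done out : qstep F (QState out [::]) (QAns out).

Definition qinit (q : query) : qstate := QState [::] [:: QFEval env0 q].

(* Init_Q(F) ->^! Ans(F')  (multisets compared up to permutation; Ans is *)
(* irreducible since no rule applies to it)                            *)
Definition qreach (F : seq (gfact A)) (q : query) (F' : seq (gfact A)) : Prop :=
  exists F'', perm_eq F'' F' /\ clos_refl_trans qstate (qstep F) (qinit q) (QAns F'').

Definition qequiv (q1 q2 : query) : Prop :=
  forall (F F' : seq (gfact A)) (s : env),
    qclosed (qsubst s q1) -> qclosed (qsubst s q2) ->
    (qreach F (qsubst s q1) F' <-> qreach F (qsubst s q2) F').

Definition unique_matching (t : fterm A) : Prop :=
  forall (s1 s2 : env) (g : gfact A),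
    ginst s1 t = Some g -> ginst s2 t = Some g ->
    forall x, x \in fvars t -> s1 x = s2 x.

Fixpoint cdet (c : cond) : Prop :=
  match c with
  | CFalse | CBool _ => True
  | CNot c1 => cdet c1
  | COr c1 c2 => cdet c1 /\ cdet c2
  | CEx P c1 =>
      (exists t, P = ([::], [:: t]) /\ unique_matching t) /\ cdet c1
  end.

End Queries.

(* Main.v *)
Require Import Defs.
From Stdlib Require Import Relations FunctionalExtensionality.
From mathcomp Require Import all_boot.
Set Implicit Arguments.
Unset Strict Implicit.


Lemma rtT {T} {R : relation T} {x y z : T} :
  clos_refl_trans T R x y -> clos_refl_trans T R y z -> clos_refl_trans T R x z.
Proof. exact: rt_trans. Qed.
Lemma rtS {T} {R : relation T} {x y : T} : R x y -> clos_refl_trans T R x y.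
Proof. exact: rt_step. Qed.
Lemma rtR {T} {R : relation T} {x : T} : clos_refl_trans T R x x.
Proof. exact: rt_refl. Qed.

Section Q.
Variable A : factAlg.
Variable F : seq (gfact A).

Notation rt := (clos_refl_trans (qstate A) (qstep F)).
Notation rt1 := (clos_refl_trans_1n (qstate A) (qstep F)).
Notation crt := (clos_refl_trans (seq (cframe A)) (cstep F)).

Lemma to1 x y : rt x y -> rt1 x y. Proof. exact: clos_rt_rt1n. Qed.
Lemma of1 x y : rt1 x y -> rt x y. Proof. exact: clos_rt1n_rt. Qed.

Lemma ans_stuck a st : rt1 (QAns a) st -> st = QAns a.
Proof. move=> H; inversion H; subst => //. inversion H0. Qed.

Lemma empty_run o o' : rt1 (QState o [::]) (QState o' [::]) -> o' = o.
Proof.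
move=> H; inversion H; subst => //.
inversion H0; subst. by move/ans_stuck: H1.
Qed.

Lemma empty_run_ans o a : rt (QState o [::]) (QAns a) -> a = o.
Proof.
move/to1 => H; inversion H; subst.
inversion H0; subst. by move/ans_stuck: H1 => [].
Qed.

Lemma q_lift o T o' T' S : qstep F (QState o T) (QState o' T') ->
  qstep F (QState o (T ++ S)) (QState o' (T' ++ S)).
Proof. move=> H; inversion H; subst => /=; econstructor; eauto. Qed.

Lemma q_lift_rt o T o' T' S : rt (QState o T) (QState o' T') ->
  rt (QState o (T ++ S)) (QState o' (T' ++ S)).
Proof.
move/to1 => H.
remember (QState o T) as x; remember (QState o' T') as z.
elim: H o T Heqx Heqz => [x0|x0 y z0 Hs Hr IH] o T Ex E.
  subst x0; case: E => -> ->; exact: rtR.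
subst x0 z0.
case: y Hs Hr IH => [o2 T2|a] Hs Hr IH.
  apply: rtT (IH _ _ erefl erefl); apply: rtS; exact: q_lift.
by move/ans_stuck: Hr.
Qed.

Lemma q_step_split o fr T S st' : qstep F (QState o (fr :: T ++ S)) st' ->
  exists o2 T2, st' = QState o2 (T2 ++ S) /\ qstep F (QState o (fr :: T)) (QState o2 T2).
Proof.
move=> H; inversion H; subst;
solve [ eexists _, T; split; [reflexivity| econstructor; eauto]
      | eexists _, (_ :: T); split; [reflexivity | econstructor; eauto]
      | eexists _, (_ :: _ :: T); split; [reflexivity | econstructor; eauto]].
Qed.

Definition fin (X : qstate A) := match X with QAns _ => True | QState _ L => L = [::] end.

Lemma split_run o T S X : rt (QState o (T ++ S)) X -> fin X ->
  exists o', rt (QState o T) (QState o' [::]) /\ rt (QState o' S) X.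
Proof.
move/to1 => H.
remember (QState o (T ++ S)) as st.
elim: H o T Heqst => [x0|x0 y z0 Hs Hr IH] o T E hf.
  case: T E => [|fr T] E.
    exists o; split; first exact: rtR. by rewrite E /=; exact: rtR.
  by subst x0.
case: T E => [|fr T] E.
  exists o; split; first exact: rtR.
  have ->: QState o S = x0 by rewrite E.
  exact: rtT (rtS Hs) (of1 Hr).
subst x0; have [o2 [T2 [E2 Hs2]]] := q_step_split Hs.
have [o' [H1 H2]] := IH o2 T2 E2 hf.
exists o'; split => //; exact: rtT (rtS Hs2) H1.
Qed.

Lemma cond_run o e S1 q o' : rt (QState o [:: QFCond e S1 q]) (QState o' [::]) ->
  exists b, crt S1 [:: FRes A b] /\
    (if b then rt (QState o [:: QFEval e q]) (QState o' [::]) else o' = o).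
Proof.
move/to1 => H.
remember (QState o [:: QFCond e S1 q]) as x; remember (QState o' [::]) as z.
elim: H S1 Heqx Heqz => [x0|x0 y z0 Hs Hr IH] S1 E1 E2.
  by subst.
subst; inversion Hs; subst.
- exists false; split; first exact: rtR. exact: empty_run Hr.
- exists true; split; first exact: rtR. exact: of1.
- have [b [Hc Hb]] := IH _ erefl erefl.
  exists b; split => //; exact: rtT (rtS H5) Hc.
Qed.

Lemma fact_run o e f o' : rt (QState o [:: QFEval e (QFact f)]) (QState o' [::]) ->
  exists g, ginst e f = Some g /\ o' = o ++ [:: g].
Proof.
move/to1 => H; inversion H; subst. inversion H0; subst.
exists g; split => //; exact: empty_run H1.
Qed.

Lemma plus_run o e q1 q2 o' : rt (QState o [:: QFEval e (QPlus q1 q2)]) (QState o' [::]) ->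
  exists o1, rt (QState o [:: QFEval e q1]) (QState o1 [::]) /\
             rt (QState o1 [:: QFEval e q2]) (QState o' [::]).
Proof.
move/to1 => H; inversion H; subst. inversion H0; subst.
have := @split_run o [:: QFEval e q1] [:: QFEval e q2] (QState o' [::]) (of1 H1) erefl.
by [].
Qed.

Lemma imp_run o e c q o' : rt (QState o [:: QFEval e (QImp c q)]) (QState o' [::]) ->
  rt (QState o [:: QFCond e [:: FEval e c] q]) (QState o' [::]).
Proof.
move/to1 => H; inversion H; subst. inversion H0; subst.
exact: of1.
Qed.

Lemma cond_lift o e S1 S2 q R : crt S1 S2 ->
  rt (QState o (QFCond e S1 q :: R)) (QState o (QFCond e S2 q :: R)).
Proof.
elim => [x y Hs|x|x y z _ H1 _ H2].
- apply: rtS; exact: qs_cond_step.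
- exact: rtR.
- exact: rtT H1 H2.
Qed.

Lemma run_cond_build o e c q b o' R X :
  crt [:: FEval e c] [:: FRes A b] ->
  (if b then rt (QState o [:: QFEval e q]) (QState o' [::]) else o' = o) ->
  rt (QState o' R) X ->
  rt (QState o (QFEval e (QImp c q) :: R)) X.
Proof.
move=> Hc Hb HR.
apply: rtT (rtS (qs_imp _ _ _ _ _ _)) _.
apply: rtT (cond_lift _ _ _ _ Hc) _.
case: b Hb {Hc} => Hb.
- apply: rtT (rtS (qs_cond_true _ _ _ _ _)) _.
  apply: rtT HR.
  exact: (@q_lift_rt o [:: QFEval e q] o' [::] R Hb).
- subst; apply: rtT (rtS (qs_cond_false _ _ _ _ _)) HR.
Qed.

Lemma part1_run o e c q1 q2 o' :
  rt (QState o [:: QFEval e (QImp c (QPlus q1 q2))]) (QState o' [::]) ->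
  rt (QState o [:: QFEval e (QPlus (QImp c q1) (QImp c q2))]) (QState o' [::]).
Proof.
move/imp_run/cond_run => [b [Hc Hb]].
apply: rtT (rtS (qs_plus _ _ _ _ _ _)) _.
case: b Hc Hb => Hc Hb.
- have [o1 [H1 H2]] := plus_run Hb.
  apply: (run_cond_build (b := true) Hc H1).
  apply: (run_cond_build (b := true) Hc H2).
  exact: rtR.
- subst; apply: (run_cond_build (b := false) Hc erefl).
  apply: (run_cond_build (b := false) Hc erefl).
  exact: rtR.
Qed.

Lemma part3_run o e c q1 q2 o' :
  (forall b1 b2, crt [:: FEval e c] [:: FRes A b1] -> crt [:: FEval e c] [:: FRes A b2] -> b1 = b2) ->
  rt (QState o [:: QFEval e (QPlus (QImp c q1) (QImp c q2))]) (QState o' [::]) ->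
  rt (QState o [:: QFEval e (QImp c (QPlus q1 q2))]) (QState o' [::]).
Proof.
move=> Hdet /plus_run [o1 [/imp_run/cond_run [b1 [Hc1 Hb1]] /imp_run/cond_run [b2 [Hc2 Hb2]]]].
have Eb := Hdet _ _ Hc1 Hc2; subst b2.
apply: (run_cond_build (b := b1) (o' := o')) Hc1 _ rtR.
clear Hc2; case: b1 Hb1 Hb2 => Hb1 Hb2; last by subst.
apply: rtT (rtS (qs_plus _ _ _ _ _ _)) _.
apply: rtT (@q_lift_rt _ _ _ _ [:: QFEval e q2] Hb1) Hb2.
Qed.

Lemma reach_iff q F' : qreach F q F' <->
  exists o, perm_eq o F' /\ rt (qinit q) (QState o [::]).
Proof.
split.
- move=> [F'' [Hp Hr]].
  have [o [H1 H2]] := @split_run [::] [:: QFEval (@env0 A) q] [::] _ Hr I.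
  move/empty_run_ans: H2 => E; subst; exists o; split => //.
- move=> [o [Hp Hr]]; exists o; split => //.
  exact: rtT Hr (rtS (qs_done _ _)).
Qed.

End Q.


Section C.
Variable A : factAlg.
Variable F : seq (gfact A).

Notation crt := (clos_refl_trans (seq (cframe A)) (cstep F)).

Inductive ev : env A -> cond A -> bool -> Prop :=
| ev_false e : ev e (@CFalse A) false
| ev_bool e B bv : bnf (bsubst e B) = Some bv -> ev e (CBool B) bv
| ev_not e c b : ev e c b -> ev e (CNot c) (~~ b)
| ev_or_t e c1 c2 : ev e c2 true -> ev e (COr c1 c2) true
| ev_or_f e c1 c2 b : ev e c2 false -> ev e c1 b -> ev e (COr c1 c2) b
| ev_ex e P c b : evx F e P c b -> ev e (CEx P c) b
with evx : seq (gfact A) -> env A -> pattern A -> cond A -> bool -> Prop :=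
| evx_nom F' e P c : nomatch e P F' -> evx F' e P c false
| evx_t F' e P c e' Fn : pmatch e P F' e' Fn -> ev e' c true -> evx F' e P c true
| evx_f F' e P c e' Fn b : pmatch e P F' e' Fn -> ev e' c false -> evx Fn e P c b ->
    evx F' e P c b.

Inductive kev : seq (cframe A) -> bool -> bool -> Prop :=
| kev_nil v : kev [::] v v
| kev_not K v r : kev K (~~ v) r -> kev (FNot A :: K) v r
| kev_down_t K e c r : kev K true r -> kev (FDown e c :: K) true r
| kev_down_f K e c b r : ev e c b -> kev K b r -> kev (FDown e c :: K) false r
| kev_ex_t K F' e P c r : kev K true r -> kev (FEx F' e P c :: K) true r
| kev_ex_f K F' e P c b r : evx F' e P c b -> kev K b r -> kev (FEx F' e P c :: K) false r.

Definition stk_ev (S : seq (cframe A)) (r : bool) : Prop :=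
  match S with
  | FRes v :: K => kev K v r
  | FEval e c :: K => exists v, ev e c v /\ kev K v r
  | FEx F' e P c :: K => exists v, evx F' e P c v /\ kev K v r
  | _ => False
  end.

Lemma cstep_back S S' r : cstep F S S' -> stk_ev S' r -> stk_ev S r.
Proof.
case=> /=.
- move=> e K H; exists false; split => //; by constructor.
- move=> e B bv K Hb H; exists bv; split => //; by constructor.
- move=> e c K [v [Hv Hk]]; inversion Hk; subst.
  exists (~~ v); split => //; by constructor.
- move=> bv K H; by constructor.
- move=> e c1 c2 K [v [Hv Hk]]; inversion Hk; subst.
  + exists true; split => //; by constructor.
  + exists b; split => //; by econstructor; eauto.
- move=> e c K H; by constructor.
- move=> e c K [v [Hv Hk]]; by econstructor; eauto.
- move=> e P c K [v [Hv Hk]]; exists v; split => //; by constructor.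
- move=> F' e P c K e' Fn Hm [v [Hv Hk]]; inversion Hk; subst.
  + exists true; split => //; by econstructor; eauto.
  + exists b; split; last by []. by apply: evx_f Hm Hv _.
- move=> F' e P c K [v [Hv Hk]]; by econstructor; eauto.
- move=> F' e P c K H; by constructor.
- move=> F' e P c K Hn H; exists false; split => //; by constructor.
Qed.


Lemma crt_back S S' : crt S S' -> forall r, stk_ev S' r -> stk_ev S r.
Proof.
elim => [x y Hs|x|x y z _ H1 _ H2] r H.
- exact: cstep_back Hs H.
- exact: H.
- exact: H1 (H2 _ H).
Qed.

Lemma crt_ev e c b : crt [:: FEval e c] [:: FRes A b] -> ev e c b.
Proof.
move=> H; have := crt_back H (r := b).
case=> /=; first by constructor.
move=> v [Hv Hk]; by inversion Hk; subst.
Qed.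

Definition Good e P c F' := exists e' Fn, pmatch e P F' e' Fn /\ ev e' c true.

Lemma pmatch_single (e : env A) (t : fterm A) (F' : seq (gfact A)) (e' : env A) Fn : pmatch e ([::], [:: t]) F' e' Fn ->
  exists b g, [/\ e' = ext_env e ([::], [:: t]) b, ginst e' t = Some g &
    perm_eq F' (Fn ++ [:: g])].
Proof.
case=> b [F'' [gb [gq [E Hb Hq Hp EF]]]].
move: Hb; rewrite /insts /=; case: gb Hp EF => // Hp EF _.
move: Hq; rewrite /insts /=; case: gq Hp EF => [|g [|g' gq]] //= Hp EF [Hg].
exists b, g; split => //. by rewrite EF cats0.
Qed.

Lemma pmatch_in (e : env A) (t : fterm A) (b : env A) (g : gfact A) (L : seq (gfact A)) : ginst (ext_env e ([::], [:: t]) b) t = Some g -> g \in L ->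
  pmatch e ([::], [:: t]) L (ext_env e ([::], [:: t]) b) (rem g L).
Proof.
move=> Hg gL; exists b, (rem g L), [::], [:: g]; split => //.
- by rewrite /insts /= Hg.
- rewrite cat0s; apply: perm_trans (perm_to_rem gL) _.
  by rewrite perm_sym perm_catC.
- by rewrite cats0.
Qed.

Lemma good_mono (e : env A) (t : fterm A) (c : cond A) (L L' : seq (gfact A)) g0 : perm_eq L' (L ++ [:: g0]) ->
  Good e ([::], [:: t]) c L -> Good e ([::], [:: t]) c L'.
Proof.
move=> Hp [e2 [Fn2 [Hm Hv]]].
have [b [g [E Hg Hp2]]] := pmatch_single Hm; subst e2.
exists (ext_env e ([::], [:: t]) b), (rem g L'); split => //.
apply: pmatch_in Hg _.
by rewrite (perm_mem Hp) mem_cat (perm_mem Hp2) mem_cat mem_seq1 eqxx orbT.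
Qed.

Lemma good_true F' e P c b : evx F' e P c b -> forall t, P = ([::], [:: t]) -> b = true ->
  Good e P c F'.
Proof.
elim => {F' e P c b}.
- by [].
- move=> F' e P c e' Fn Hm Hv t _ _; by exists e', Fn.
- move=> F' e P c e' Fn b Hm Hv Hx IH t EP Eb; subst.
  have [b0 [g [_ _ Hp]]] := pmatch_single Hm.
  exact: good_mono Hp (IH _ erefl erefl).
Qed.

Lemma ext_eq (e : env A) (t : fterm A) (b1 b2 : env A) (g : gfact A) : unique_matching t ->
  ginst (ext_env e ([::], [:: t]) b1) t = Some g ->
  ginst (ext_env e ([::], [:: t]) b2) t = Some g ->
  ext_env e ([::], [:: t]) b1 = ext_env e ([::], [:: t]) b2.
Proof.
move=> UM H1 H2; apply: functional_extensionality => x.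
case Hx: (x \in fvars t); first exact: UM H1 H2 x Hx.
by rewrite /ext_env /pvars /= cats0 Hx.
Qed.

Lemma not_good F' e P c b : evx F' e P c b -> forall t, P = ([::], [:: t]) -> b = false ->
  unique_matching t ->
  (forall e' b1 b2, ev e' c b1 -> ev e' c b2 -> b1 = b2) ->
  ~ Good e P c F'.
Proof.
elim => {F' e P c b}.
- move=> F' e P c Hn t _ _ _ _ [e' [Fn [Hm _]]]; exact: Hn Hm.
- by [].
- move=> F' e P c e1 Fn b Hm Hv Hx IH t EP Eb UM Hdet; subst.
  move=> [e2 [Fn2 [Hm2 Hv2]]].
  have [b1 [g1 [E1 Hg1 Hp1]]] := pmatch_single Hm.
  have [b2 [g2 [E2 Hg2 Hp2]]] := pmatch_single Hm2.
  subst e1 e2.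
  case: (eqVneq g2 g1) => [Eg|Ng].
  + subst g2; have E := ext_eq UM Hg1 Hg2.
    rewrite E in Hv; by have := Hdet _ _ _ Hv Hv2.
  + apply: (IH _ erefl erefl UM Hdet).
    exists (ext_env e ([::], [:: t]) b2), (rem g2 Fn); split => //.
    apply: pmatch_in Hg2 _.
    have : g2 \in F' by rewrite (perm_mem Hp2) mem_cat mem_seq1 eqxx orbT.
    by rewrite (perm_mem Hp1) mem_cat mem_seq1 (negbTE Ng) orbF.
Qed.

Lemma ev_ex_inv e P c b : ev e (CEx P c) b -> evx F e P c b.
Proof. by move=> H; inversion H. Qed.

Lemma ev_det (c : cond A) : cdet c -> forall e b1 b2, ev e c b1 -> ev e c b2 -> b1 = b2.
Proof.
elim: c => [|B|c IH|c1 IH1 c2 IH2|P c IH] /= Hd e b1 b2 H1 H2.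
- by inversion H1; inversion H2.
- inversion H1; inversion H2; subst. congruence.
- inversion H1; subst; inversion H2; subst. f_equal; apply: (IH Hd e); eassumption.
- case: Hd => Hd1 Hd2.
  inversion H1; subst; inversion H2; subst => //.
  1-3: first [ by case: (IH2 Hd2 e true false ltac:(eassumption) ltac:(eassumption))
             | by case: (IH2 Hd2 e false true ltac:(eassumption) ltac:(eassumption))
             | by apply: (IH1 Hd1 e); eassumption ].
- case: Hd => [[t [EP UM]] Hd].
  move/ev_ex_inv: H1 => H5; move/ev_ex_inv: H2 => H10; subst P.
  have Hdet := IH Hd.
  case: b1 H5 => H5; case: b2 H10 => H10 //.
  + by case: (not_good H10 erefl erefl UM Hdet (good_true H5 erefl erefl)).
  + by case: (not_good H5 erefl erefl UM Hdet (good_true H10 erefl erefl)).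
Qed.

End C.


Definition cx_fvars (t : (nat + option bool)%type) : seq unit :=
  match t with inr None => [:: tt] | _ => [::] end.
Definition cx_fsubst (s : unit -> option bool) (t : (nat + option bool)%type) :=
  match t with
  | inr None => match s tt with Some v => inr (Some v) | None => t end
  | _ => t end.
Definition cx_fnf (t : (nat + option bool)%type) : option nat :=
  match t with inl n => Some n | inr None => None | inr (Some _) => Some 0 end.
Definition cx_bvars (b : option bool) : seq unit := if b is None then [:: tt] else [::].
Definition cx_bsubst (s : unit -> option bool) (b : option bool) :=
  match b with None => s tt | Some v => Some v end.
Definition cx_bnf (b : option bool) := b.

Lemma cx1 s t x : x \in cx_fvars (cx_fsubst s t) <-> (x \in cx_fvars t /\ s x = None).
Proof.
case: x; case: t => [n|[v|]] /=; rewrite ?in_nil ?in_cons ?eqxx; try by split => // [[]].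
by case: (s tt) => [v|] /=; rewrite ?in_nil ?in_cons ?eqxx; split => // [[]].
Qed.
Lemma cx2 s1 s2 t : (forall x, x \in cx_fvars t -> s1 x = s2 x) -> cx_fsubst s1 t = cx_fsubst s2 t.
Proof.
case: t => [n|[v|]] //= H. by rewrite (H tt) // in_cons eqxx.
Qed.
Lemma cx3 t : cx_fnf t = None <-> cx_fvars t <> [::].
Proof. by case: t => [n|[v|]]. Qed.
Lemma cx4 s b x : x \in cx_bvars (cx_bsubst s b) <-> (x \in cx_bvars b /\ s x = None).
Proof.
case: x; case: b => [v|] /=; rewrite ?in_nil ?in_cons ?eqxx; try by split => // [[]].
by case: (s tt) => [v|] /=; rewrite ?in_nil ?in_cons ?eqxx; split => // [[]].
Qed.
Lemma cx5 s1 s2 b : (forall x, x \in cx_bvars b -> s1 x = s2 x) -> cx_bsubst s1 b = cx_bsubst s2 b.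
Proof. case: b => [v|] //= H. by rewrite (H tt) // in_cons eqxx. Qed.
Lemma cx6 b : cx_bnf b = None <-> cx_bvars b <> [::].
Proof. by case: b. Qed.

Definition CX : factAlg :=
  @FactAlg unit bool nat (nat + option bool)%type (option bool)
    cx_fvars cx_fsubst cx_fnf cx_bvars cx_bsubst cx_bnf cx1 cx2 cx3 cx4 cx5 cx6.

Definition cxP : pattern CX := ([::], [:: (inr None : fterm CX)]).
Definition cxphi : cond CX := CEx cxP (CBool (None : bterm CX)).
Definition cxQ1 : query CX := QFact (inl 1 : fterm CX).
Definition cxQ2 : query CX := QFact (inl 2 : fterm CX).


Lemma cdet_subst (A : factAlg) (c : cond A) bnd s : cdet c -> cdet (csubst_in bnd s c).
Proof.
elim: c bnd => [|B|c IH|c1 IH1 c2 IH2|P c IH] bnd //=.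
- exact: IH.
- by case=> H1 H2; split; [exact: IH1|exact: IH2].
- by case=> H1 H2; split => //; exact: IH.
Qed.

Notation crtC F := (clos_refl_trans (seq (cframe CX)) (cstep F)).

Definition e0 : env CX := @env0 CX.
Definition bT : env CX := fun _ => Some true.
Definition bF : env CX := fun _ => Some false.

Lemma cx_match b F' : pmatch e0 cxP (0 :: F') (ext_env e0 cxP b) F' ->
  True.
Proof. by []. Qed.

Lemma cx_pm b v F' : b tt = Some v ->
  pmatch e0 cxP ((0 : gfact CX) :: F') (ext_env e0 cxP b) F'.
Proof.
move=> Hb; exists b, F', [::], [:: (0 : gfact CX)]; split => //.
- by rewrite /insts /= /ginst /= /ext_env /= Hb.
- by rewrite /= perm_sym perm_catC.
- by rewrite cats0.
Qed.

Lemma cx_nom : nomatch e0 cxP [::].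
Proof.
move=> e' Fn /pmatch_single [b [g [_ _ Hp]]].
by move: (perm_size Hp); rewrite size_cat /= addn1.
Qed.

Lemma cx_true : crtC [:: (0 : gfact CX)] [:: FEval e0 cxphi] [:: FRes CX true].
Proof.
rewrite /cxphi.
eapply rtT; [eapply rtS; eapply cs_ex|].
eapply rtT; [eapply rtS; eapply cs_ex_match; exact: (cx_pm [::] (b := bT) (v := true) erefl)|].
eapply rtT; [eapply rtS; eapply cs_bool; reflexivity|].
eapply rtS; eapply cs_ex_true.
Qed.

Lemma cx_false : crtC [:: (0 : gfact CX)] [:: FEval e0 cxphi] [:: FRes CX false].
Proof.
rewrite /cxphi.
eapply rtT; [eapply rtS; eapply cs_ex|].
eapply rtT; [eapply rtS; eapply cs_ex_match; exact: (cx_pm [::] (b := bF) (v := false) erefl)|].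
eapply rtT; [eapply rtS; eapply cs_bool; reflexivity|].
eapply rtT; [eapply rtS; eapply cs_ex_false|].
eapply rtS; eapply cs_ex_nomatch; exact: cx_nom.
Qed.

Theorem lemma12 :
  (* (1) phi => (Q1 (+) Q2)  implies  (phi => Q1) (+) (phi => Q2) *)
  (forall (A : factAlg) (phi : cond A) (Q1 Q2 : query A),
     cond_wf phi -> query_wf Q1 -> query_wf Q2 ->
     forall (F F' : seq (gfact A)) (s : env A),
       cclosed (csubst s phi) -> qclosed (qsubst s Q1) -> qclosed (qsubst s Q2) ->
       qreach F (qsubst s (QImp phi (QPlus Q1 Q2))) F' ->
       qreach F (qsubst s (QPlus (QImp phi Q1) (QImp phi Q2))) F')
  /\
  (* (2) the converse does not hold in general *)
  ~ (forall (A : factAlg) (phi : cond A) (Q1 Q2 : query A),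
       cond_wf phi -> query_wf Q1 -> query_wf Q2 ->
       forall (F F' : seq (gfact A)) (s : env A),
         cclosed (csubst s phi) -> qclosed (qsubst s Q1) -> qclosed (qsubst s Q2) ->
         qreach F (qsubst s (QPlus (QImp phi Q1) (QImp phi Q2))) F' ->
         qreach F (qsubst s (QImp phi (QPlus Q1 Q2))) F')
  /\
  (* (3) equivalence for deterministic conditions *)
  (forall (A : factAlg) (phi : cond A) (Q1 Q2 : query A),
     cond_wf phi -> query_wf Q1 -> query_wf Q2 -> cdet phi ->
     qequiv (QPlus (QImp phi Q1) (QImp phi Q2)) (QImp phi (QPlus Q1 Q2))).
Proof.
split; [|split].
- move=> A phi Q1 Q2 _ _ _ F F' s _ _ _ /reach_iff [o [Hp Hr]].
  apply/reach_iff; exists o; split => //.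
  exact: part1_run Hr.
- move=> H.
  have Hq : qreach [:: (0 : gfact CX)] (qsubst e0 (QPlus (QImp cxphi cxQ1) (QImp cxphi cxQ2))) [:: 1].
    apply/reach_iff; exists [:: 1]; split => //.
    apply: rtT (rtS (qs_plus _ _ _ _ _ _)) _.
    apply: (run_cond_build (b := true) cx_true).
      by eapply rtS; eapply qs_fact; reflexivity.
    apply: (run_cond_build (b := false) cx_false erefl).
    exact: rtR.
  have W : cond_wf cxphi by split.
  have C1 : cclosed (csubst e0 cxphi) by [].
  have C2 : qclosed (qsubst e0 cxQ1) by [].
  have C3 : qclosed (qsubst e0 cxQ2) by [].
  move: (H CX cxphi cxQ1 cxQ2 W I I [:: 0] [:: 1] e0 C1 C2 C3 Hq).
  move/reach_iff => [o [Hp /imp_run /cond_run [b [_ Hb]]]].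
  case: b Hb => Hb; last by subst o.
  have [o1 [/fact_run [g1 [Hg1 E1]] /fact_run [g2 [Hg2 E2]]]] := plus_run Hb.
  case: Hg1 => Eg1; case: Hg2 => Eg2; subst.
  by [].
- move=> A phi Q1 Q2 _ _ _ Hd F F' s _ _; split.
  + move/reach_iff => [o [Hp Hr]]; apply/reach_iff; exists o; split => //.
    apply: part3_run Hr => b1 b2 /crt_ev H1 /crt_ev H2.
    exact: ev_det (cdet_subst _ _ Hd) _ _ _ H1 H2.
  + move/reach_iff => [o [Hp Hr]]; apply/reach_iff; exists o; split => //.
    exact: part1_run Hr.
Qed.
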